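(* Let $F\in\mathrm{GL}^+(2)$ and $H\in\mathbb{R}^{2\times2}$ such that $\operatorname{rank}(H)=1$ and $F+H\in\mathrm{GL}^+(2)$. Then there exists at most one $t\in[0,1]$ such that $F+tH$ has non-simple singular values (i.e. its two singular values coincide).
   Context: $\mathrm{GL}^+(2)$ is the group of real invertible $2\times2$ matrices with positive determinant. *)

(* Defs.v *)
From mathcomp Require Import all_boot all_order all_algebra.
From mathcomp Require Import reals.
Set Implicit Arguments. Unset Strict Implicit. Unset Printing Implicit Defensive.
Import Order.TTheory GRing.Theory Num.Theory.
Local Open Scope ring_scope.

Definition GLplus (R : realType) (n : nat) (A : 'M[R]_n) : Prop := 0 < \det A.

Definition orthogonal_mx (R : realType) (n : nat) (Q : 'M[R]_n) : Prop :=
  Q^T *m Q = 1%:M.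

Definition singular_values2 (R : realType) (A : 'M[R]_2) (s1 s2 : R) : Prop :=
  s2 <= s1 /\ 0 <= s2 /\
  exists U V : 'M[R]_2, orthogonal_mx U /\ orthogonal_mx V /\
    A = U *m diag_mx (\row_(i < 2) (if i == 0 :> 'I_2 then s1 else s2)) *m V^T.

Definition nonsimple_singular_values (R : realType) (A : 'M[R]_2) : Prop :=
  exists s1 s2 : R, singular_values2 A s1 s2 /\ s1 = s2.

(* Main.v *)
Require Import Defs.
From mathcomp Require Import all_boot all_order all_algebra.
From mathcomp Require Import reals ring lra.
Import Order.TTheory GRing.Theory Num.Theory.
Local Open Scope ring_scope.
Lemma det2 (R : comNzRingType) (A : 'M[R]_2) : \det A = A 0 0 * A 1 1 - A 0 1 * A 1 0.
Proof.
rewrite (expand_det_row _ 0) !big_ord_recl big_ord0 /cofactor !det_mx11 !mxE /=.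
have -> : (lift 0 0 : 'I_2) = 1 by exact/val_inj.
have -> : (lift 1 0 : 'I_2) = 0 by exact/val_inj.
have -> : (ord0 : 'I_2) = 0 by exact/val_inj.
rewrite /= expr0 expr1; ring.
Qed.

Lemma conf (R : realType) (A : 'M[R]_2) : 0 < \det A -> nonsimple_singular_values A ->
  A 0 0 = A 1 1 /\ A 0 1 = - A 1 0.
Proof.
move=> dA [s1 [s2 [[_ [s0 [U [V [oU [oV eA]]]]]] e]]]; subst s2.
have D : diag_mx (\row_(i<2) (if i == 0 then s1 else s1)) = s1%:M.
  by rewrite -diag_const_mx; congr diag_mx; apply/matrixP=> i j; rewrite !mxE if_same.
rewrite D mul_mx_scalar -scalemxAl in eA.
set W := U *m V^T in eA.
have oW : W^T *m W = 1%:M.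
  rewrite /W trmx_mul trmxK mulmxA -(mulmxA V) oU mulmx1.
  exact: mulmx1C oV.
have dW : \det W ^+ 2 = 1.
  by rewrite expr2 -{1}det_tr -det_mulmx oW det1.
have dAW : \det A = s1 ^+ 2 * \det W by rewrite eA detZ.
clearbody W.
have e00 : (W^T *m W) 0 0 = (1%:M : 'M[R]_2) 0 0 by rewrite oW.
have e01 : (W^T *m W) 0 1 = (1%:M : 'M[R]_2) 0 1 by rewrite oW.
have e11 : (W^T *m W) 1 1 = (1%:M : 'M[R]_2) 1 1 by rewrite oW.
move: e00 e01 e11; rewrite !mxE !big_ord_recl big_ord0 !mxE /=.
have -> : (lift ord0 ord0 : 'I_2) = 1 by exact/val_inj.
rewrite ?big_ord0 ?mxE /= ?addr0.
move: dW dAW; rewrite det2.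
have -> : A 0 0 = s1 * W 0 0 by rewrite eA mxE.
have -> : A 1 1 = s1 * W 1 1 by rewrite eA mxE.
have -> : A 0 1 = s1 * W 0 1 by rewrite eA mxE.
have -> : A 1 0 = s1 * W 1 0 by rewrite eA mxE.
move: dA; rewrite det2.
have -> : (ord0 : 'I_2) = 0 by exact/val_inj.
set a := W 0 0; set b := W 0 1; set c := W 1 0; set d := W 1 1.
move=> dA dW dAW h1 h2 h3.
rewrite dAW in dA.
have sp : 0 < s1 ^+ 2.
  rewrite lt0r sqr_ge0 andbT sqrf_eq0; apply: contraTneq dA => ->.
  by rewrite expr0n /= mul0r ltxx.
have dp : 0 < a * d - b * c by rewrite -(pmulr_rgt0 _ sp).
have d1 : a * d - b * c = 1.
  by move/eqP: dW; rewrite sqrf_eq1 => /orP[/eqP//|/eqP h]; move: dp; rewrite h; lra.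
have sq : (a - d) ^+ 2 + (b + c) ^+ 2 = 0.
  have -> : (a - d) ^+ 2 + (b + c) ^+ 2 = (a * a + c * c) + (b * b + d * d) - 2 * (a * d - b * c) by ring.
  by rewrite h1 h3 d1; ring.
move/eqP: sq; rewrite paddr_eq0 ?sqr_ge0 // !sqrf_eq0 => /andP[/eqP e1 /eqP e2].
have ad : a = d by apply/eqP; rewrite -subr_eq0 e1.
have bc : b = - c by apply/eqP; rewrite -subr_eq0 opprK e2.
by rewrite ad bc; split; ring.
Qed.

Lemma ord2_cases (i : 'I_2) : i = 0 \/ i = 1.
Proof. by case: i => [[|[|//]] p]; [left|right]; apply/val_inj. Qed.

Theorem corollary3p10 (R : realType) (F H : 'M[R]_2) :
  GLplus F -> \rank H = 1%N -> GLplus (F + H) ->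
  forall t1 t2 : R,
    0 <= t1 <= 1 -> 0 <= t2 <= 1 ->
    nonsimple_singular_values (F + t1 *: H) ->
    nonsimple_singular_values (F + t2 *: H) ->
    t1 = t2.
Proof.
move=> dF rH dFH t1 t2 t1b t2b n1 n2.
rewrite /GLplus in dF dFH.
have dH : \det H = 0.
  case: (eqVneq (\det H) 0) => // hne; exfalso.
  have : H \in unitmx by rewrite unitmxE unitfE.
  by move/mxrank_unit; rewrite rH.
have dpos : forall t, 0 <= t <= 1 -> 0 < \det (F + t *: H).
  move=> t /andP[t0 t1'].
  have -> : \det (F + t *: H) = (1 - t) * \det F + t * \det (F + H) + (t ^+ 2 - t) * \det H.
    by rewrite !det2 !mxE; ring.
  rewrite dH mulr0 addr0.
  case: (ltrP t 1) => ht.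
    have : 0 < (1 - t) * \det F by apply: mulr_gt0 => //; lra.
    have : 0 <= t * \det (F + H) by apply: mulr_ge0 => //; apply: ltW.
    lra.
  have -> : t = 1 by lra.
  by rewrite subrr mul0r add0r mul1r.
have [a1 b1] := @conf R _ (dpos _ t1b) n1.
have [a2 b2] := @conf R _ (dpos _ t2b) n2.
move: a1 b1 a2 b2; rewrite !mxE => a1 b1 a2 b2.
case: (eqVneq t1 t2) => // hne; exfalso.
have ht : t1 - t2 != 0 by rewrite subr_eq0.
have e1 : (t1 - t2) * (H 0 0 - H 1 1) = 0.
  have -> : (t1 - t2) * (H 0 0 - H 1 1) =
    (F 0 0 + t1 * H 0 0 - (F 1 1 + t1 * H 1 1)) - (F 0 0 + t2 * H 0 0 - (F 1 1 + t2 * H 1 1)) by ring.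
  by rewrite a1 a2; ring.
have e2 : (t1 - t2) * (H 0 1 + H 1 0) = 0.
  have -> : (t1 - t2) * (H 0 1 + H 1 0) =
    (F 0 1 + t1 * H 0 1 + (F 1 0 + t1 * H 1 0)) - (F 0 1 + t2 * H 0 1 + (F 1 0 + t2 * H 1 0)) by ring.
  by rewrite b1 b2; ring.
move/eqP: e1; rewrite mulf_eq0 (negbTE ht) /= subr_eq0 => /eqP h1.
move/eqP: e2; rewrite mulf_eq0 (negbTE ht) /= addr_eq0 => /eqP h2.
move: dH; rewrite det2 h1 h2 => /eqP.
have -> : H 1 1 * H 1 1 - - H 1 0 * H 1 0 = H 1 1 ^+ 2 + H 1 0 ^+ 2 by ring.
rewrite paddr_eq0 ?sqr_ge0 // !sqrf_eq0 => /andP[/eqP z1 /eqP z2].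
have H0 : H = 0.
  apply/matrixP => i j; rewrite mxE.
  by case: (ord2_cases i) => ->; case: (ord2_cases j) => ->; rewrite ?h1 ?h2 ?z1 ?z2 ?oppr0.
by move: rH; rewrite H0 mxrank0.
Qed.
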